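(* Let $\sigma:\mathcal{A}^*\to\mathcal{B}^*$ be a return morphism for two distinct words $w,w'\in\mathcal{B}^+$ with $|w|\le|w'|$, and let $X$ be a shift space over $\mathcal{A}$. Then: (1) $w$ is a proper prefix of $w'$; (2) $\sigma$ is a return morphism for every prefix of $w'$ of length at least $|w|$; (3) $w$ is not right special in $\sigma\cdot X$; (4) if $w'$ has maximal length among the words for which $\sigma$ is a return morphism, then $w'$ is right special in $\sigma\cdot X$.
   Context: $\mathcal{A},\mathcal{B}$ are finite alphabets. A shift space over $\mathcal{A}$ is a nonempty closed shift-invariant $X\subseteq\mathcal{A}^{\mathbb{Z}}$ whose language contains every letter of $\mathcal{A}$. Morphisms are non-erasing monoid morphisms extended to $\mathcal{A}^{\mathbb{Z}}$ by concatenation, and $\sigma\cdot X=\{S^k\sigma(x): x\in X, 0\le k<|\sigma(x_0)|\}$ where $S$ is the shift. A return morphism for $w\in\mathcal{B}^+$ is an injective morphism $\sigma:\mathcal{A}^*\to\mathcal{B}^*$ such that for every $a\in\mathcal{A}$, $\sigma(a)w$ contains exactly two occurrences of $w$, one as a proper prefix and one as a proper suffix. A word $u$ is right special in a shift $Y$ if there are at least two letters $b$ with $ub$ in the language of $Y$. *)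

(* Defs.v *)
From mathcomp Require Import all_boot all_order all_algebra.
Set Implicit Arguments. Unset Strict Implicit. Unset Printing Implicit Defensive.
Import Order.TTheory GRing.Theory Num.Theory.
Local Open Scope ring_scope.

Definition shiftS (T : Type) (x : int -> T) : int -> T := fun i => x (i + 1).

Definition in_lang (T : Type) (Y : (int -> T) -> Prop) (u : seq T) : Prop :=
  exists y i, Y y /\ u = [seq y (i + j%:Z) | j <- iota 0 (size u)].

(* Shift space over A: nonempty, closed (product topology, A discrete:
   a point all of whose central windows are approximated by points of X
   lies in X), shift-invariant (S X = X), every letter in the language. *)
Definition shift_space (A : finType) (X : (int -> A) -> Prop) : Prop :=
  [/\ exists x, X x,
      (forall x : int -> A,
          (forall n : nat, exists y, X y /\
             forall i : int, - (n%:Z) <= i <= n%:Z -> y i = x i) -> X x),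
      (forall x, X x <-> X (shiftS x)) &
      (forall a : A, in_lang X [:: a])].

Definition morph_word (A B : Type) (sigma : A -> seq B) (u : seq A) : seq B :=
  flatten (map sigma u).

Definition nonerasing (A B : Type) (sigma : A -> seq B) : Prop :=
  forall a, (size (sigma a) > 0)%N.

(* z = sigma(x): sigma(x_0) starts at position 0, concatenation. *)
Definition is_image (A B : Type) (sigma : A -> seq B) (x : int -> A) (z : int -> B) : Prop :=
  exists p : int -> int, p 0 = 0 /\
    (forall n, p (n + 1) = p n + (size (sigma (x n)))%:Z) /\
    (forall n, [seq z (p n + j%:Z) | j <- iota 0 (size (sigma (x n)))] = sigma (x n)).

Definition morph_act (A B : Type) (sigma : A -> seq B) (X : (int -> A) -> Prop) :
  (int -> B) -> Prop :=
  fun y => exists x z (k : nat), [/\ X x, is_image sigma x z,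
     (k < size (sigma (x 0)))%N & forall i, y i = z (i + k%:Z)].

Definition occurs_at (B : eqType) (w s : seq B) (i : nat) : bool :=
  ((i + size w <= size s)%N && (take (size w) (drop i s) == w)).

Definition nb_occ (B : eqType) (w s : seq B) : nat :=
  count (occurs_at w s) (iota 0 (size s).+1).

Definition proper_prefix (B : eqType) (u v : seq B) : bool :=
  prefix u v && (size u < size v)%N.
Definition proper_suffix (B : eqType) (u v : seq B) : bool :=
  suffix u v && (size u < size v)%N.

Definition return_morphism (A B : finType) (sigma : A -> seq B) (w : seq B) : Prop :=
  [/\ nonerasing sigma,
      (forall u v, morph_word sigma u = morph_word sigma v -> u = v),
      w != [::] &
      forall a, [/\ nb_occ w (sigma a ++ w) = 2%N,
                    proper_prefix w (sigma a ++ w),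
                    occurs_at w (sigma a ++ w) 0 &
                    proper_suffix w (sigma a ++ w) /\
                    occurs_at w (sigma a ++ w) (size (sigma a))]].

Definition right_special (B : Type) (Y : (int -> B) -> Prop) (u : seq B) : Prop :=
  exists b1 b2 : B, b1 <> b2 /\ in_lang Y (rcons u b1) /\ in_lang Y (rcons u b2).

(* Main.v *)
Require Import Defs.
From mathcomp Require Import all_boot all_order all_algebra zify.
From Stdlib Require Classical_Prop.
Set Implicit Arguments. Unset Strict Implicit.
Import Order.TTheory GRing.Theory Num.Theory.

Lemma mono_step (f : int -> int) : (forall n, f n < f (n+1))%R -> forall m (k:nat), (f m + k%:Z <= f (m + k%:Z))%R.
Proof.
move=> Hf m; elim=> [|k IH]; first by rewrite !addr0.
have -> : (m + k.+1%:Z = (m + k%:Z) + 1)%R by lia.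
have := Hf (m + k%:Z)%R. lia.
Qed.

Lemma mono_le (f : int -> int) : (forall n, f n < f (n+1))%R -> forall m n, (m <= n)%R -> (f m <= f n)%R.
Proof.
move=> Hf m n mn. have := mono_step Hf m (absz (n - m)).
have -> : (m + (absz (n - m))%:Z = n)%R by lia. lia.
Qed.

Lemma loc_uniq (f : int -> int) : (forall n, f n < f (n+1))%R -> forall m n q,
  (f m <= q < f (m+1))%R -> (f n <= q < f (n+1))%R -> m = n.
Proof.
move=> Hf m n q H1 H2.
case: (ltgtP m n) => // h.
  have := @mono_le f Hf (m+1)%R n; lia.
have := @mono_le f Hf (n+1)%R m; lia.
Qed.

Lemma loc (f : int -> int) : f 0 = 0 -> (forall n, f n < f (n+1))%R ->
  forall q, exists n, (f n <= q < f (n+1))%R.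
Proof.
move=> f0 Hf q.
have Hp k : (k%:Z <= f k%:Z)%R by have := mono_step Hf 0 k; rewrite add0r f0; lia.
have Hn k : (f (- k%:Z) <= - k%:Z)%R by have := mono_step Hf (- k%:Z) k; rewrite addNr f0; lia.
case: (lerP 0 q) => hq.
  have exP : exists k, (q < f k%:Z)%R by exists (absz q).+1; have := Hp (absz q).+1; lia.
  case: (ex_minnP exP) => k0 P0 min0.
  have k0pos : (0 < k0)%N by case: k0 P0 {min0} => //; rewrite f0; lia.
  exists (Posz k0.-1). have -> : ((Posz k0.-1) + 1 = Posz k0)%R by lia.
  rewrite P0 andbT. case: (lerP (f (Posz k0.-1)) q) => // h.
  have := min0 _ h. lia.
have exP : exists k, (f (- k%:Z) <= q)%R by exists (absz q); have := Hn (absz q); lia.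
case: (ex_minnP exP) => k0 P0 min0.
have k0pos : (0 < k0)%N by case: k0 P0 {min0} => //; rewrite oppr0 f0; lia.
exists (- k0%:Z)%R. rewrite P0 /=.
have -> : (- k0%:Z + 1 = - (Posz k0.-1))%R by lia.
case: (lerP (f (- (Posz k0.-1))%R) q) => // h.
have := min0 _ h. lia.
Qed.

Ltac szfix := repeat match goal with H : context[@size _ _] |- _ => revert H end;
  repeat (match goal with |- context[@size ?T ?x] => let n := fresh "n" in set n := @size T x; clearbody n end); intros.
Ltac lia' := szfix; lia.

Section W.
Variables (A B : finType) (sigma : A -> seq B) (d : B).

Lemma occP (w s : seq B) i : reflect ((i + size w <= size s)%N /\
   forall j, (j < size w)%N -> nth d s (i+j) = nth d w j) (occurs_at w s i).
Proof.
rewrite /occurs_at; apply: (iffP andP) => [[h /eqP e]|[h e]]; split=> //.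
  by move=> j hj; rewrite -[in RHS]e nth_take // nth_drop.
apply/eqP; apply: (eq_from_nth (x0:=d)).
  rewrite size_take size_drop; apply/minn_idPl. lia'.
move=> j; rewrite size_take size_drop => hj.
have hj' : (j < size w)%N by move: hj; rewrite /minn; case: ifP; lia'.
by rewrite nth_take // nth_drop e.
Qed.

Lemma count2 (p : pred nat) (s : seq nat) a b : uniq s -> a != b ->
  a \in s -> b \in s -> (forall i, i \in s -> p i = (i == a) || (i == b)) ->
  count p s = 2.
Proof.
move=> us ab as_ bs hp.
rewrite (eq_in_count (a2 := predU (pred1 a) (pred1 b))); last by move=> i /hp.
have e0 : count (predI (pred1 a) (pred1 b)) s = 0%N.
  rewrite (eq_count (a2 := pred0)) ?count_pred0 // => i /=.
  by case: (i =P a) => //= ->; rewrite (negbTE ab).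
have := count_predUI (pred1 a) (pred1 b) s.
rewrite e0 addn0 => ->.
by rewrite !count_uniq_mem // as_ bs.
Qed.

Lemma retL1 w a i : return_morphism sigma w -> occurs_at w (sigma a ++ w) i ->
  i = 0%N \/ i = size (sigma a).
Proof.
case=> ne _ _ /(_ a) [H2 _ H0 [_ Hs]] Hi.
case: (eqVneq i 0%N) => [->|i0]; first by left.
case: (eqVneq i (size (sigma a))) => [->|i1]; first by right.
exfalso.
have s0 : size (sigma a) != 0%N by have := ne a; lia'.
have : (3 <= count (occurs_at w (sigma a ++ w)) (iota 0 (size (sigma a ++ w)).+1))%N.
  rewrite -size_filter.
  have -> : 3%N = size [:: 0%N; size (sigma a); i] by [].
  apply: uniq_leq_size.
    by rewrite /= !inE negb_or eq_sym s0 eq_sym i0 eq_sym i1.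
  move=> k; rewrite !inE mem_filter mem_iota size_cat => /or3P [] /eqP ->.
  - by rewrite H0 /=; lia'.
  - by rewrite Hs /=; lia'.
  - rewrite Hi /=. move/occP: Hi => [h _]; move: h; rewrite size_cat; lia'.
by move: H2; rewrite /nb_occ => ->.
Qed.

Lemma retP0 w a j : return_morphism sigma w -> (j < size w)%N ->
  nth d (sigma a ++ w) j = nth d w j.
Proof. by case=> _ _ _ /(_ a) [_ _ /occP [_ h] _] /h. Qed.

Lemma retPER w a j : return_morphism sigma w -> (j < size w)%N ->
  nth d w j = nth d (sigma a) (j %% size (sigma a)).
Proof.
move=> R; have ne : (0 < size (sigma a))%N by case: R => h _ _ _; exact: h.
elim: j {-2}j (leqnn j) => [|n IH] j hj hjw.
  have j0 : j = 0%N by lia'.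
  subst j; by rewrite -(@retP0 _ a _ R) // nth_cat ne mod0n.
rewrite -(@retP0 _ a _ R) // nth_cat.
case: ltnP => h; first by rewrite modn_small.
rewrite IH; [|lia'|lia'].
by rewrite -{2}(subnK h) modnDr.
Qed.

Lemma retEXT u v : return_morphism sigma u ->
  (forall j, (j < size u)%N -> nth d v j = nth d u j) -> (size u <= size v)%N ->
  (forall a, occurs_at v (sigma a ++ v) 0) -> return_morphism sigma v.
Proof.
move=> R huv suv H0; have R' := R; case: R' => ne inj un _.
have su : (0 < size u)%N by rewrite lt0n size_eq0.
have sv : (0 < size v)%N by lia'.
split=> //.
  by apply/eqP => v0; move: sv; rewrite v0.
move=> a.
have Hs : occurs_at v (sigma a ++ v) (size (sigma a)).
  apply/occP; split; first by rewrite size_cat.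
  by move=> j hj; rewrite nth_cat ltnNge leq_addr /= addKn.
have na := ne a.
split=> //.
- apply: (count2 (a := 0%N) (b := size (sigma a))).
  + exact: iota_uniq.
  + by rewrite eq_sym -lt0n.
  + by rewrite mem_iota.
  + by rewrite mem_iota size_cat; lia'.
  move=> i _; apply/idP/idP.
    move=> Hi; have : occurs_at u (sigma a ++ u) i.
      move/occP: Hi => [h1 h2]; apply/occP; split.
        by move: h1; rewrite !size_cat; lia'.
      move=> j hj.
      have e1 : nth d (sigma a ++ v) (i + j) = nth d (sigma a ++ u) (i+j).
        rewrite !nth_cat; case: ltnP => // h; apply: huv.
        move: h1; rewrite size_cat; lia'.
      by rewrite -e1 h2 ?huv //; lia'.
    by case/(@retL1 _ _ _ R) => ->; rewrite eqxx ?orbT.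
  by case/orP => /eqP ->.
- rewrite /proper_prefix size_cat; apply/andP; split; last lia'.
  rewrite prefixE; move/occP: (H0 a) => [_ h].
  apply/eqP; apply: (eq_from_nth (x0:=d)).
    by rewrite size_take size_cat; apply/minn_idPl; lia'.
  move=> j; rewrite size_take size_cat => hj.
  have hj' : (j < size v)%N by move: hj; rewrite /minn; case: ifP; lia'.
  by rewrite nth_take // -h.
- rewrite /proper_suffix size_cat; split=> //; apply/andP; split; last lia'.
  exact: suffix_suffix.
Qed.
End W.

Section Img.
Variables (A B : finType) (sigma : A -> seq B) (d : B).
Variables (x : int -> A) (z : int -> B) (p : int -> int).
Hypothesis ne : nonerasing sigma.
Hypothesis Hps : forall n, p (n + 1)%R = (p n + (size (sigma (x n)))%:Z)%R.
Hypothesis Hw : forall n, [seq z (p n + j%:Z)%R | j <- iota 0 (size (sigma (x n)))] = sigma (x n).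

Lemma pinc n : (p n < p (n + 1))%R.
Proof. rewrite Hps; have := ne (x n); lia. Qed.

Lemma img_nth n j : (j < size (sigma (x n)))%N -> z (p n + j%:Z)%R = nth d (sigma (x n)) j.
Proof.
move=> hj; rewrite -[in RHS](Hw n) (nth_map 0%N) ?size_iota // nth_iota //.
Qed.

Lemma img_pre w : return_morphism sigma w -> forall n j, (j < size w)%N ->
  z (p n + j%:Z)%R = nth d w j.
Proof.
move=> R n j; elim: j {-2}j (leqnn j) n => [|m IH] j hj n hjw;
  have nx := ne (x n).
  have j0 : j = 0%N by lia. subst j.
  by rewrite img_nth // -(@retP0 _ _ sigma d _ (x n) _ R) // nth_cat nx.
case: (ltnP j (size (sigma (x n)))) => h.
  by rewrite img_nth // -(@retP0 _ _ sigma d _ (x n) _ R) // nth_cat h.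
have -> : (p n + j%:Z = p (n + 1) + (j - size (sigma (x n)))%N%:Z)%R.
  rewrite Hps; lia'.
rewrite IH; [|lia'|lia'].
by rewrite -(@retP0 _ _ sigma d _ (x n) j R) // nth_cat ltnNge h.
Qed.

Lemma img_ext w : return_morphism sigma w -> forall n j,
  (j < size (sigma (x n)) + size w)%N ->
  z (p n + j%:Z)%R = nth d (sigma (x n) ++ w) j.
Proof.
move=> R n j hj; rewrite nth_cat; case: ltnP => h; first exact: img_nth.
have -> : (p n + j%:Z = p (n + 1) + (j - size (sigma (x n)))%N%:Z)%R.
  rewrite Hps; lia'.
rewrite (img_pre R) //; lia'.
Qed.

Lemma img_occ w q : return_morphism sigma w -> p 0 = 0 ->
  (forall j, (j < size w)%N -> z (q + j%:Z)%R = nth d w j) -> exists n, q = p n.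
Proof.
move=> R p0 Hq.
have [n /andP [h1 h2]] := loc p0 pinc q.
exists n. case: (eqVneq q (p n)) => // qn; exfalso.
pose i := absz (q - p n).
have hi : (q = p n + i%:Z)%R by rewrite /i; lia.
have i0 : i != 0%N by rewrite /i; lia.
have his : (i < size (sigma (x n)))%N by move: h2; rewrite Hps /i; lia.
have : occurs_at w (sigma (x n) ++ w) i.
  apply/(@occP _ d); split; first by rewrite size_cat; lia'.
  move=> j hj. rewrite -(img_ext R); last by rewrite /=; lia'.
  by rewrite -Hq // hi; congr z; lia.
case/(@retL1 _ _ sigma d _ _ _ R) => e; [by rewrite e in i0 | by rewrite e ltnn in his].
Qed.
End Img.

Section Con.
Variables (A B : finType) (sigma : A -> seq B) (d : B).

Lemma constr (x : int -> A) : nonerasing sigma -> exists z, is_image sigma x z.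
Proof.
move=> ne.
pose s n := size (sigma (x n)).
pose Sp m := \sum_(k < m) s (Posz k).
pose Sn m := \sum_(k < m) s (- (Posz k.+1))%R.
pose P n := match n with Posz m => Posz (Sp m) | Negz m => (- Posz (Sn m.+1))%R end.
have P0 : P 0%R = 0%R by rewrite /P /Sp /= big_ord0.
have Ps n : P (n + 1)%R = (P n + (s n)%:Z)%R.
  case: n => m.
    have -> : (Posz m + 1 = Posz m.+1)%R by lia.
    by rewrite /P /Sp big_ord_recr /= PoszD.
  case: m => [|m].
    have -> : (Negz 0 + 1 = Posz 0)%R by [].
    rewrite /P /Sn /Sp /= big_ord_recr !big_ord0 /= add0n.
    have -> : Negz 0 = (- Posz 1)%R by []. lia.
  have -> : (Negz m.+1 + 1 = Negz m)%R by rewrite !NegzE; lia.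
  rewrite /P /Sn (big_ord_recr m.+1) /=.
  have -> : Negz m.+1 = (- Posz m.+2)%R by rewrite NegzE.
  rewrite PoszD. lia.
have Pinc n : (P n < P (n + 1))%R by rewrite Ps; have := ne (x n); rewrite /s; lia.
have L := loc P0 Pinc.
pose c q := xchoose (L q).
have cP q : (P (c q) <= q < P (c q + 1))%R := xchooseP (L q).
exists (fun t => nth d (sigma (x (c t))) (absz (t - P (c t))%R)).
exists P; split=> //; split=> // n.
apply: (eq_from_nth (x0 := d)); first by rewrite size_map size_iota.
move=> j; rewrite size_map size_iota => hj.
rewrite (nth_map 0%N) ?size_iota // nth_iota //=.
have -> : c (P n + j%:Z)%R = n.
  apply: (loc_uniq Pinc (cP _)); rewrite Ps; rewrite /s; lia.
congr nth; lia.
Qed.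
End Con.

Lemma in_langE (T : Type) (Y : (int -> T) -> Prop) (u : seq T) (d : T) :
  in_lang Y u <-> exists y i, Y y /\ forall j, (j < size u)%N -> y (i + j%:Z)%R = nth d u j.
Proof.
split=> [[y [i [Yy e]]]|[y [i [Yy e]]]]; exists y, i; split=> //.
  move=> j hj; rewrite [in RHS]e (nth_map 0%N) ?size_iota // nth_iota // add0n.
apply: (eq_from_nth (x0 := d)); first by rewrite size_map size_iota.
move=> j hj; rewrite (nth_map 0%N) ?size_iota // nth_iota // add0n e //.
Qed.

Lemma follow (A B : finType) (sigma : A -> seq B) (d : B) X w w' b :
  return_morphism sigma w -> return_morphism sigma w' -> (size w < size w')%N ->
  in_lang (morph_act sigma X) (rcons w b) -> b = nth d w' (size w).
Proof.
move=> Rw Rw' sw /(in_langE _ _ d) [y [i [[x [z [k [Xx [p [p0 [Hps Hw]]] hk Hy]]]] Hu]]].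
have ne : nonerasing sigma by case: Rw.
have Hz j : (j <= size w)%N -> z ((i + k%:Z) + j%:Z)%R = nth d (rcons w b) j.
  move=> hj; rewrite -Hu ?size_rcons // Hy; congr z; lia.
have [n en] : exists n, (i + k%:Z)%R = p n.
  apply: (img_occ ne Hps Hw Rw p0) => j hj.
  by rewrite Hz ?nth_rcons ?hj // ltnW.
have := Hz (size w) (leqnn _); rewrite nth_rcons ltnn eqxx en => <-.
exact: (img_pre d ne Hps Hw Rw').
Qed.

Lemma inl (A B : finType) (sigma : A -> seq B) (d : B) X w' x z p :
  return_morphism sigma w' -> X x -> p 0%R = 0%R ->
  (forall n, p (n + 1)%R = (p n + (size (sigma (x n)))%:Z)%R) ->
  (forall n, [seq z (p n + j%:Z)%R | j <- iota 0 (size (sigma (x n)))] = sigma (x n)) ->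
  forall n, in_lang (morph_act sigma X) (rcons w' (z (p n + (size w')%:Z)%R)).
Proof.
move=> R Xx p0 Hps Hw n.
have ne : nonerasing sigma by case: R.
apply/(in_langE _ _ d); exists z, (p n); split.
  exists x, z, 0%N; split; [done | by exists p | exact: ne | by move=> i; rewrite addr0].
move=> j; rewrite size_rcons ltnS nth_rcons => hj.
case: ltnP => h; first exact: (img_pre d ne Hps Hw R).
have e : j = size w' by lia'.
by rewrite e eqxx.
Qed.

Lemma pref_nth (B : finType) (d : B) (v w : seq B) j : prefix v w -> (j < size v)%N ->
  nth d v j = nth d w j.
Proof. rewrite prefixE => /eqP e hj; by rewrite -[in LHS]e nth_take. Qed.

Theorem mainTheorem3 (A B : finType) (sigma : A -> seq B) (w w' : seq B)
  (X : (int -> A) -> Prop) :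
  w <> w' -> return_morphism sigma w -> return_morphism sigma w' ->
  (size w <= size w')%N -> shift_space X ->
  [/\ proper_prefix w w',
      (forall v, prefix v w' -> (size w <= size v)%N -> return_morphism sigma v),
      ~ right_special (morph_act sigma X) w &
      ((forall v, return_morphism sigma v -> (size v <= size w')%N) ->
        right_special (morph_act sigma X) w')].
Proof.
move=> neq Rw Rw' sww' [[x0 Xx0] _ _ Xlet].
have [d _] : exists d : B, True.
  by case: w Rw {neq sww'} => [[_ _ /eqP]|b _ _]; [ | exists b].
have ne : nonerasing sigma by case: Rw.
have Hpre j : (j < size w)%N -> nth d w' j = nth d w j.
  move=> hj; rewrite (retPER d (x0 0) Rw hj) (retPER d (x0 0) Rw') //; lia'.
have sw : (size w < size w')%N.
  rewrite ltn_neqAle sww' andbT; apply/eqP => e; apply: neq.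
  by apply: (eq_from_nth (x0 := d)) => // j hj; rewrite Hpre.
have PP : proper_prefix w w'.
  rewrite /proper_prefix sw andbT prefixE; apply/eqP.
  apply: (eq_from_nth (x0 := d)); first by rewrite size_take; apply/minn_idPl; lia'.
  move=> j; rewrite size_take => hj.
  have hj' : (j < size w)%N by move: hj; rewrite /minn; case: ifP; lia'.
  by rewrite nth_take // Hpre.
split=> //.
- move=> v pv svw.
  apply: (@retEXT _ _ _ d w v Rw).
  + move=> j hj; rewrite (pref_nth d pv); last lia'.
    exact: Hpre.
  + exact: svw.
  move=> a; apply/(@occP _ d); split; first by rewrite size_cat; lia'.
  move=> j hj.
  have sv : (size v <= size w')%N := size_prefix pv.
  rewrite add0n (pref_nth d pv hj) -(@retP0 _ _ sigma d _ a _ Rw'); last lia'.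
  rewrite !nth_cat; case: ltnP => // h.
  apply: pref_nth => //; lia'.
- move=> [b1 [b2 [nb [L1 L2]]]]; apply: nb.
  by rewrite (follow d Rw Rw' sw L1) (follow d Rw Rw' sw L2).
move=> Hmax.
have [x1 Hx1] : exists z, is_image sigma x0 z := constr d x0 ne.
case: Hx1 => p [p0 [Hps Hw]].
set b0 := x1 (p 0%R + (size w')%:Z)%R.
have Lb0 := inl d Rw' Xx0 p0 Hps Hw 0.
apply: Classical_Prop.NNPP => nrs.
have uniqb b : in_lang (morph_act sigma X) (rcons w' b) -> b = b0.
  move=> Lb; case: (eqVneq b b0) => // nbb; exfalso; apply: nrs.
  by exists b, b0; split=> //; apply/eqP.
pose v := rcons w' b0.
have Rv : return_morphism sigma v.
  apply: (@retEXT _ _ _ d w' v Rw').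
  + by move=> j hj; rewrite /v nth_rcons hj.
  + by rewrite /v size_rcons.
  move=> a.
  have [y0 [i0 [Xy0 e0]]] := Xlet a.
  have ea : a = y0 (i0 + 0%N%:Z)%R by move: e0 => /= [].
  have [z1 Hz1] : exists z, is_image sigma y0 z := constr d y0 ne.
  case: Hz1 => p1 [p10 [Hps1 Hw1]].
  have Lb1 := inl d Rw' Xy0 p10 Hps1 Hw1 (i0 + 0%N%:Z)%R.
  have eb := uniqb _ Lb1.
  apply/(@occP _ d); split; first by rewrite size_cat; lia'.
  move=> j hj; rewrite add0n.
  have na := ne a.
  have hj' : (j <= size w')%N by move: hj; rewrite /v size_rcons; lia'.
  have -> : nth d (sigma a ++ v) j = nth d (sigma a ++ w') j.
    rewrite !nth_cat; case: ltnP => // h.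
    rewrite /v nth_rcons; case: ifP => //; lia'.
  rewrite ea -(img_ext d ne Hps1 Hw1 Rw'); last by rewrite -ea; lia'.
  rewrite /v nth_rcons; case: ltnP => h.
    by rewrite (img_pre d ne Hps1 Hw1 Rw').
  have e : j = size w' by lia'.
  by rewrite e eqxx -eb.
have := Hmax v Rv; rewrite /v size_rcons; lia'.
Qed.
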